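(* Let $Y$ be a Young diagram. For any 2-cover $P$ of $H(Y)$ there exists a 2-cover $P'$ of $H(Y)$ such that $|P'|=|P|$ and $P'\cap(C\times S)$ is closed down.
   Context: For $Y$ with row lengths $a_1\ge\cdots\ge a_m\ge0$, $H(Y)$ has vertex sides $R=\{r_1,\dots,r_m\}$, $C=\{c_1,\dots,c_{a_1}\}$, $S=\{s_1,\dots,s_{a_1}\}$ and edges $\{r_i,c_j,s_k\}$ for $1\le i\le m$, $1\le j,k\le a_i$. A 2-cover of $H(Y)$ is a set of 2-element vertex sets such that every edge contains a member of it. $C\times S$ is the set of pairs $c_js_k$. A set $\Gamma\subseteq C\times S$ is closed down if $c_ps_q\in\Gamma$ implies $c_{p'}s_{q'}\in\Gamma$ for all $p'\le p$, $q'\le q$. *)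

(* Defs.v *)
From mathcomp Require Import all_boot.
Set Implicit Arguments. Unset Strict Implicit. Unset Printing Implicit Defensive.

(* A Young diagram is given by its row lengths a = [:: a_1; ...; a_m],
   weakly decreasing. Indices are 0-based: row i (i < m) has length nth 0 a i. *)
Definition young (a : seq nat) : bool := sorted geq a.

Definition nrows (a : seq nat) : nat := size a.
Definition ncols (a : seq nat) : nat := head 0 a.

Definition vtx (a : seq nat) : finType :=
  ('I_(nrows a) + ('I_(ncols a) + 'I_(ncols a)))%type.

Definition rv (a : seq nat) (i : 'I_(nrows a)) : vtx a := inl i.
Definition cv (a : seq nat) (j : 'I_(ncols a)) : vtx a := inr (inl j).
Definition sv (a : seq nat) (k : 'I_(ncols a)) : vtx a := inr (inr k).

(* The edge {r_i, c_j, s_k}, an edge of H(Y) iff j, k < a_i (0-based). *)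
Definition hedge (a : seq nat) (i : 'I_(nrows a)) (j k : 'I_(ncols a))
  : {set vtx a} := [set rv i; cv j; sv k].

Definition two_cover (a : seq nat) (P : {set {set vtx a}}) : Prop :=
  (forall e, e \in P -> #|e| = 2) /\
  (forall (i : 'I_(nrows a)) (j k : 'I_(ncols a)),
      j < nth 0 a i -> k < nth 0 a i ->
      exists2 e, e \in P & e \subset hedge i j k).

Definition cs_pair (a : seq nat) (j k : 'I_(ncols a)) : {set vtx a} :=
  [set cv j; sv k].

Definition CS_part (a : seq nat) (P : {set {set vtx a}}) : {set {set vtx a}} :=
  [set e in P | [exists j, exists k, e == cs_pair j k]].

Definition closed_down (a : seq nat) (G : {set {set vtx a}}) : Prop :=
  forall p q p' q' : 'I_(ncols a),
    cs_pair p q \in G -> p' <= p -> q' <= q -> cs_pair p' q' \in G.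

(* Main.v *)
Require Import Defs.
From mathcomp Require Import all_boot all_fingroup zify.
Set Implicit Arguments. Unset Strict Implicit. Unset Printing Implicit Defensive.

Lemma perm_exists (T : finType) (A B : {set T}) :
  #|A| = #|B| -> exists s : {perm T}, s @: A = B.
Proof.
move eqk: #|A :\: B| => k; elim: k A eqk => [|k IH] A eqk cAB.
  exists 1%g; rewrite imset_perm1; apply/eqP; rewrite eqEcard cAB leqnn andbT.
  by rewrite -setD_eq0 -cards_eq0 eqk.
have /set0Pn [x xAB] : A :\: B != set0 by rewrite -card_gt0 eqk.
have cBA : #|B :\: A| = k.+1.
  by move: (cardsID B A) (cardsID A B); rewrite setIC cAB eqk; lia.
have /set0Pn [y yBA] : B :\: A != set0 by rewrite -card_gt0 cBA.
move: xAB yBA; rewrite !inE => /andP[xB xA] /andP[yA yB].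
set A' := tperm x y @: A.
have memA' z : (z \in A') = (tperm x y z \in A).
  by rewrite -{1}(tpermK x y z) mem_imset //; apply: perm_inj.
have eA' : A' :\: B = (A :\: B) :\ x.
  apply/setP => z; rewrite !inE memA'.
  case: tpermP => [->|->|/eqP zx /eqP zy]; rewrite ?eqxx ?xB ?yB ?xA ?yA //=.
  - exact/negbTE.
  - by rewrite andbF.
  - by rewrite zx.
have [s hs] : exists s : {perm T}, s @: A' = B.
  apply: IH; last by rewrite card_imset //; apply: perm_inj.
  by move: (cardsD1 x (A :\: B)); rewrite eA' eqk !inE xA xB; lia.
exists (tperm x y * s)%g; rewrite -hs /A' -imset_comp; apply: eq_imset => z.
by rewrite permM.
Qed.
Lemma count_int lo hi n :
  count (fun x => (lo <= x) && (x < hi)) (iota 0 n) = minn n hi - minn n lo.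
Proof.
elim: n => [|n IH]; first by rewrite /= !min0n.
rewrite -addn1 iotaD count_cat IH /= add0n.
case: (leqP lo n) => h1; case: (ltnP n hi) => h2 /=; lia.
Qed.

Section S.
Variable a : seq nat.
Hypothesis Ya : young a.
Local Notation n := (ncols a).
Local Notation m := (nrows a).
Local Notation V := (vtx a).

Lemma nth_le_n (i : 'I_m) : nth 0 a i <= n.
Proof.
move: Ya (ltn_ord i); rewrite /young /ncols /nrows.
case: (nat_of_ord i) => [|j]; case: a => [|x s] //= Hp hj.
have := order_path_min _ Hp; move=> /(_ (fun u v w h1 h2 => leq_trans h2 h1)).
by move/allP => /(_ (nth 0 s j) (mem_nth 0 hj)).
Qed.

Definition Iv (lo hi : nat) : {set 'I_n} := [set j : 'I_n | (lo <= j) && (j < hi)].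

Lemma card_Iv lo hi : hi <= n -> #|Iv lo hi| = hi - lo.
Proof.
move=> h; rewrite cardsE cardE /enum_mem -enumT size_filter /=.
have -> : count (mem (fun j : 'I_n => (lo <= j) && (j < hi))) (enum 'I_n)
  = count (fun x => (lo <= x) && (x < hi)) (map val (enum 'I_n)).
  by rewrite count_map.
by rewrite val_enum_ord count_int; lia.
Qed.


Definition isC (v : V) : bool := if v is inr (inl _) then true else false.
Definition nonC (e : {set V}) : {set V} := [set x in e | ~~ isC x].
Definition NC (P : {set {set V}}) (v : V) : {set 'I_n} :=
  [set j | [set cv j; v] \in P].
Definition Aset P (v : V) : {set 'I_n} :=
  match v with
  | inl i => NC P v :&: Iv 0 (nth 0 a i)
  | inr (inl _) => set0
  | inr (inr _) => NC P v end.
Definition Tset P (v : V) : {set 'I_n} :=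
  match v with
  | inl i => Iv (nth 0 a i - #|Aset P v|) (nth 0 a i)
  | inr (inl _) => set0
  | inr (inr _) => Iv 0 #|Aset P v| end.
Definition pi P v : {perm 'I_n} :=
  odflt 1%g [pick s : {perm 'I_n} | s @: Aset P v == Tset P v].
Definition sig P v (x : V) : V :=
  match x with inr (inl j) => inr (inl (pi P v j)) | _ => x end.
Definition fe P (e : {set V}) : {set V} :=
  if [pick v | nonC e == [set v]] is Some v then sig P v @: e else e.
Definition step P := [set fe P e | e in P].

Lemma sig_inj P v : injective (sig P v).
Proof.
move=> [x|[x|x]] [y|[y|y]] //= [] // h; congr (inr (inl _)); exact: perm_inj h.
Qed.

Lemma sig_nC P v x : ~~ isC x -> sig P v x = x.
Proof. by case: x => [x|[x|x]]. Qed.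

Lemma isC_sig P v x : isC (sig P v x) = isC x.
Proof. by case: x => [x|[x|x]]. Qed.

Lemma nonC_sig P v (e : {set V}) : nonC (sig P v @: e) = nonC e.
Proof.
apply/setP => z; rewrite !inE; apply/andP/andP => [[/imsetP[y ye ->] hy]|[ze hz]].
  by rewrite isC_sig in hy; rewrite sig_nC.
by split => //; rewrite -(sig_nC P v hz); apply: imset_f.
Qed.

Lemma fe_nonC P e : nonC (fe P e) = nonC e.
Proof. by rewrite /fe; case: pickP => // v _; rewrite nonC_sig. Qed.

Lemma fe_inj P : injective (fe P).
Proof.
move=> e1 e2 h; have hn : nonC e1 = nonC e2 by rewrite -(fe_nonC P e1) h fe_nonC.
move: h; rewrite /fe hn; case: pickP => // v _; exact: (imset_inj (@sig_inj P v)).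
Qed.

Lemma fe_card P e : #|fe P e| = #|e|.
Proof. by rewrite /fe; case: pickP => // v _; rewrite card_imset //; apply: sig_inj. Qed.

Lemma fe_pair P v x : ~~ isC v -> fe P [set cv x; v] = [set cv (pi P v x); v].
Proof.
move=> hv; have hn : nonC [set cv x; v] = [set v].
  apply/setP => z; rewrite !inE; case: eqP => [->|] //=.
    by apply/esym/eqP => h; move: hv; rewrite -h.
  by move=> _; case: eqP => // ->; rewrite hv.
rewrite /fe hn; case: pickP => [w /eqP /set1_inj <-|/(_ v)]; last by rewrite eqxx.
by rewrite imsetU1 imset_set1 (sig_nC P v hv).
Qed.

Lemma fe_fix P e : (forall v, nonC e != [set v]) -> fe P e = e.
Proof. by move=> h; rewrite /fe; case: pickP => // v; rewrite (negbTE (h v)). Qed.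

Lemma step_pair P v x : ~~ isC v ->
  ([set cv (pi P v x); v] \in step P) = ([set cv x; v] \in P).
Proof. by move=> hv; rewrite -fe_pair // mem_imset //; apply: fe_inj. Qed.

Lemma cardAT P v : #|Aset P v| = #|Tset P v|.
Proof.
case: v => [i|[j|k]] /=.
- rewrite card_Iv ?nth_le_n //.
  have : #|NC P (inl i) :&: Iv 0 (nth 0 a i)| <= nth 0 a i.
    by rewrite -{2}(subn0 (nth 0 a i)) -card_Iv ?nth_le_n // subset_leq_card // subsetIr.
  by move=> h; rewrite subKn.
- by rewrite cards0.
- rewrite card_Iv ?subn0 //; apply: leq_trans (max_card _) _; by rewrite card_ord.
Qed.

Lemma pi_spec P v : pi P v @: Aset P v = Tset P v.
Proof.
rewrite /pi; case: pickP => [s /eqP //|H].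
have [s hs] := perm_exists (cardAT P v); by move: (H s); rewrite hs eqxx.
Qed.

Lemma memTset P v j : (j \in Tset P v) = ((pi P v)^-1%g j \in Aset P v).
Proof. by rewrite -pi_spec -{1}(permKV (pi P v) j) mem_imset //; apply: perm_inj. Qed.


Lemma sub3 (e : {set V}) x y z : #|e| = 2 -> e \subset [set x; y; z] ->
  [\/ e = [set x; y], e = [set x; z] | e = [set y; z]].
Proof.
move/eqP/cards2P => [u [w [uw ->]]] /subsetP H.
have := H u (set21 u w); have := H w (set22 u w).
rewrite !inE => hw hu.
rewrite -!orbA in hu hw; case/or3P: hu => /eqP ?; case/or3P: hw => /eqP ?; subst;
  rewrite ?eqxx in uw => //;
  by [apply: Or31 | apply: Or32 | apply: Or33 | apply: Or31; rewrite setUC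
     | apply: Or32; rewrite setUC | apply: Or33; rewrite setUC].
Qed.

Lemma step_cover P : two_cover P -> two_cover (step P).
Proof.
move=> [P2 Pc]; split.
  by move=> e' /imsetP [e eP ->]; rewrite fe_card; exact: P2.
move=> i j k hj hk.
case: (boolP ([set rv i; sv k] \in P)) => [rsP | rsN].
  exists [set rv i; sv k].
    apply/imsetP; exists [set rv i; sv k] => //; rewrite fe_fix //.
    move=> v; apply/negP => /eqP h.
    have h1 : rv i \in nonC [set rv i; sv k] by rewrite !inE eqxx.
    have h2 : sv k \in nonC [set rv i; sv k] by rewrite !inE eqxx orbT.
    by move: h1 h2; rewrite h !inE => /eqP <-.
  by apply/subsetP => x; rewrite !inE => /orP[]->; rewrite ?orbT.
have key : forall j' : 'I_n, j' < nth 0 a i ->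
    (j' \in Aset P (rv i)) || (j' \in Aset P (sv k)).
  move=> j' hj'; have [e eP esub] := Pc i j' k hj' hk.
  case: (sub3 (P2 e eP) esub) => he; rewrite he in eP.
  - by rewrite /= !inE setUC eP hj'.
  - by rewrite eP in rsN.
  - by rewrite /= !inE eP orbT.
have hcard : nth 0 a i <= #|Aset P (rv i)| + #|Aset P (sv k)|.
  rewrite -{1}(subn0 (nth 0 a i)) -card_Iv ?nth_le_n //.
  apply: leq_trans (leq_card_setU _ _); apply: subset_leq_card.
  apply/subsetP => x; rewrite [x \in Iv _ _]inE => /andP[_ hx]; rewrite in_setU; exact: key.
case: (ltnP j #|Aset P (sv k)|) => hjs.
  have : (pi P (sv k))^-1%g j \in Aset P (sv k) by rewrite -memTset /= inE hjs.
  rewrite /= inE -(step_pair _ _ (isT : ~~ isC (sv k))) permKV => hin.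
  exists [set cv j; sv k] => //.
  by apply/subsetP => x; rewrite !inE => /orP[]->; rewrite ?orbT.
have : (pi P (rv i))^-1%g j \in Aset P (rv i).
  by rewrite -memTset /= inE hj andbT; move: hcard hjs => /= hc hs; lia.
rewrite /= !inE -(step_pair _ _ (isT : ~~ isC (rv i))) permKV => /andP[hin _].
exists [set cv j; rv i] => //.
by apply/subsetP => x; rewrite !inE => /orP[]->; rewrite ?orbT.
Qed.

Definition LJC (P : {set {set V}}) := forall j j' k : 'I_n,
  cs_pair j k \in P -> j' <= j -> cs_pair j' k \in P.
Definition LJS (P : {set {set V}}) := forall j k k' : 'I_n,
  cs_pair j k \in P -> k' <= k -> cs_pair j k' \in P.

Lemma step_cs P j k : (cs_pair j k \in step P) = (j < #|NC P (sv k)|).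
Proof.
have -> : cs_pair j k = [set cv (pi P (sv k) ((pi P (sv k))^-1%g j)); sv k].
  by rewrite permKV.
rewrite step_pair //.
transitivity ((pi P (sv k))^-1%g j \in Aset P (sv k)); first by rewrite /= inE.
by rewrite -memTset /= inE.
Qed.

Lemma step_LJC P : LJC (step P).
Proof. by move=> j j' k; rewrite !step_cs => h1 h2; apply: leq_ltn_trans h2 h1. Qed.

Lemma step_LJS P : LJS P -> LJS (step P).
Proof.
move=> H j k k'; rewrite !step_cs => h1 h2; apply: leq_trans h1 _.
apply: subset_leq_card; apply/subsetP => x; rewrite !inE => hx.
exact: H hx h2.
Qed.

Definition swv (x : V) : V :=
  match x with inl i => inl i | inr (inl j) => inr (inr j) | inr (inr k) => inr (inl k) end.
Lemma swvK : involutive swv. Proof. by case=> [x|[x|x]]. Qed.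
Lemma swv_inj : injective swv. Proof. exact: inv_inj swvK. Qed.
Definition swap (P : {set {set V}}) : {set {set V}} := [set swv @: e | e : {set V} in P].

Lemma swap_mem P (e : {set V}) : (swv @: e \in swap P) = (e \in P).
Proof. by rewrite mem_imset //; apply: imset_inj swv_inj. Qed.

Lemma swv_hedge i j k : swv @: hedge i k j = hedge i j k.
Proof.
rewrite /hedge !(imsetU, imsetU1, imset_set1) /=; apply/setP => x; rewrite !inE; case: (x == rv i) => //=; by case: (x == cv j); case: (x == sv k).
Qed.

Lemma swv_cs j k : swv @: cs_pair k j = cs_pair j k.
Proof. by rewrite /cs_pair imsetU1 imset_set1 /= setUC. Qed.

Lemma swap_cover P : two_cover P -> two_cover (swap P).
Proof.
move=> [P2 Pc]; split.
  by move=> e' /imsetP [e eP ->]; rewrite card_imset; [exact: P2 | exact: swv_inj].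
move=> i j k hj hk; have [e eP esub] := Pc i k j hk hj.
exists (swv @: e); first by rewrite swap_mem.
by rewrite -swv_hedge; apply: imsetS.
Qed.

Lemma swap_LJ P : LJC P -> LJS (swap P).
Proof.
move=> H j k k'; rewrite -(swv_cs j k) -(swv_cs j k') !swap_mem => h1 h2; exact: H h1 h2.
Qed.

End S.

Theorem lemma5 (a : seq nat) (Ya : young a) (P : {set {set vtx a}}) :
  two_cover P ->
  exists P' : {set {set vtx a}},
    [/\ two_cover P', #|P'| = #|P| & closed_down (CS_part P')].
Proof.
move=> Pc.
exists (step (swap (step P))); split.
- by apply: step_cover => //; apply: swap_cover; apply: step_cover.
- rewrite /step /swap !card_imset //; try exact: fe_inj.
  exact: (imset_inj (@swv_inj a)).
- have hC : LJC (step (swap (step P))) := @step_LJC a Ya _.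
  have hS : LJS (step (swap (step P))) := step_LJS Ya (swap_LJ (@step_LJC a Ya P)).
  move=> p q p' q'; rewrite !inE => /andP[h _] hp hq.
  apply/andP; split; last by apply/existsP; exists p'; apply/existsP; exists q'.
  exact: hS (hC _ _ _ h hp) hq.
Qed.
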